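(* Assume the standing hypotheses (H). Then $d:=\sup\{\sqrt{x_1^2+x_2^2}:\ \mathbf{x}\in\operatorname{Supp}\rho\}<\infty$.
   Context: Standing hypotheses (H): $K\subset\mathbb{R}^3$ is a bounded axisymmetric domain (invariant under rotations about the $x_3$-axis) satisfying the no-trapping condition (whenever $(x,y,z)\notin K$, the half line $(x,y,z)+t(x,y,0)$, $t\ge0$, lies in $\mathbb{R}^3\setminus K$). $f:[0,\infty)\to[0,\infty)$ satisfies (F1) non-negative, continuous, strictly increasing for $s>0$; (F2) $\lim_{s\to0}f(s)s^{-4/3}=0$, $\lim_{s\to\infty}f(s)s^{-4/3}=\infty$; (F3) $\liminf_{s\to\infty}f(s)s^{-\gamma}>0$ for some $\gamma>4/3$; (F4) $f\in C^1(0,\infty)$ and $\liminf_{s\to0}f'(s)s^{-\mu}>0$ for some $\mu>0$. $A(s)=s\int_0^s\frac{f(t)}{t^2}dt$. For $q>3$, $\rho_K\in L^q(K)$ is non-negative and axisymmetric and $\Phi_K(\mathbf{x})=\int_K\frac{\rho_K(\mathbf{y})}{|\mathbf{x}-\mathbf{y}|}d\mathbf{y}$. $M>0$; $\Omega\ge1$ is a constant. For $\rho$ on $\mathbb{R}^3\setminus K$, $B\rho(\mathbf{x})=\int_{\mathbb{R}^3\setminus K}\frac{\rho(\mathbf{y})}{|\mathbf{x}-\mathbf{y}|}d\mathbf{y}$. $\rho:\mathbb{R}^3\setminus K\to[0,\infty)$ is bounded and continuous with $\int\rho=M$, and there is a constant $\lambda$ such that $A'(\rho)-B\rho-\frac12\Omega^2r^2-\Phi_K=\lambda$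 on $\{\rho>0\}$, where $r=\sqrt{x_1^2+x_2^2}$. *)

(* Defs.v *)
From HB Require Import structures.
From mathcomp Require Import all_boot all_order all_algebra.
From mathcomp Require Import all_classical all_reals all_analysis.
Set Implicit Arguments. Unset Strict Implicit. Unset Printing Implicit Defensive.
Import Order.TTheory GRing.Theory Num.Theory.
Import numFieldNormedType.Exports.
Local Open Scope classical_set_scope.
Local Open Scope ring_scope.

Definition pt (R : realType) := (R * R * R)%type.

Section defs.
Variable R : realType.

Definition leb3 := ((@lebesgue_measure R \x @lebesgue_measure R) \x @lebesgue_measure R)%E.

Definition dist3 (x y : pt R) : R :=
  Num.sqrt ((x.1.1 - y.1.1) ^+ 2 + (x.1.2 - y.1.2) ^+ 2 + (x.2 - y.2) ^+ 2).

Definition rcyl (x : pt R) : R := Num.sqrt (x.1.1 ^+ 2 + x.1.2 ^+ 2).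

Definition rotz (th : R) (x : pt R) : pt R :=
  ((cos th * x.1.1 - sin th * x.1.2, sin th * x.1.1 + cos th * x.1.2), x.2).

Definition bounded3 (K : set (pt R)) : Prop :=
  exists C : R, forall x, K x -> dist3 x ((0, 0), 0) <= C.

Definition domain3 (K : set (pt R)) : Prop := open K /\ connected K.

Definition axisym_set (K : set (pt R)) : Prop :=
  forall th x, K x <-> K (rotz th x).

Definition axisym_fun (D : set (pt R)) (g : pt R -> R) : Prop :=
  forall th x, D x -> g (rotz th x) = g x.

Definition no_trapping (K : set (pt R)) : Prop :=
  forall x : pt R, ~ K x -> forall t : R, 0 <= t ->
    ~ K ((x.1.1 + t * x.1.1, x.1.2 + t * x.1.2), x.2).

Definition Lq_on (D : set (pt R)) (q : R) (g : pt R -> R) : Prop :=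
  measurable_fun D g /\
  (\int[leb3]_(x in D) ((`|g x| `^ q)%:E) < +oo)%E.

Definition mass3 (D : set (pt R)) (g : pt R -> R) : \bar R :=
  (\int[leb3]_(x in D) ((g x)%:E))%E.

Definition newton (D : set (pt R)) (g : pt R -> R) (x : pt R) : R :=
  fine (\int[leb3]_(y in D) ((g y / dist3 x y)%:E))%E.

Definition Icc0 (s : R) : set R := `[0, s].

Definition Afun (f : R -> R) (s : R) : R :=
  s * fine (\int[@lebesgue_measure R]_(t in Icc0 s) ((f t / t ^+ 2)%:E))%E.

Definition F1 (f : R -> R) : Prop :=
  (forall s, 0 <= s -> 0 <= f s) /\
  {within `[0, +oo[, continuous f} /\
  (forall s t, 0 < s -> s < t -> f s < f t).

Definition F2 (f : R -> R) : Prop :=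
  (fun s => f s * s `^ (- (4 / 3))) @ 0^'+ --> 0 /\
  (fun s => f s * s `^ (- (4 / 3))) @ +oo --> +oo.

Definition F3 (f : R -> R) : Prop :=
  exists gam : R, 4 / 3 < gam /\
    (0 < limf_einf (fun s => (f s * s `^ (- gam))%:E) (pinfty_nbhs R))%E.

Definition F4 (f : R -> R) : Prop :=
  (forall s : R, 0 < s -> derivable f s 1) /\
  (forall s : R, 0 < s -> derive1 f x @[x --> s] --> derive1 f s) /\
  exists mu : R, 0 < mu /\
    (0 < limf_einf (fun s : R => (derive1 f s * s `^ (- mu))%:E) 0^'+)%E.

End defs.

(* Main.v *)
Require Import Defs.
From HB Require Import structures.
From mathcomp Require Import all_boot all_order all_algebra.
From mathcomp Require Import all_classical all_reals all_analysis.
From mathcomp Require Import measurable_realfun.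
From mathcomp.algebra_tactics Require Import lra.
Import Order.TTheory GRing.Theory Num.Theory.
Import numFieldNormedType.Exports.
Local Open Scope classical_set_scope.
Local Open Scope ring_scope.
Set Implicit Arguments. Unset Strict Implicit.

Definition gg (R : realType) (f : R -> R) (t : R) : R := f t / t ^+ 2.
Arguments gg {R} f t.

Lemma gg_ge0 (R : realType) (f : R -> R) (t : R) : F1 f -> 0 <= t -> 0 <= gg f t.
Proof.
move=> [f0 _] t0; rewrite /gg divr_ge0 ?f0 ?sqr_ge0 //.
Qed.

Lemma gg_der (R : realType) (f : R -> R) (t : R) : F4 f -> 0 < t -> derivable (gg f) t 1.
Proof.
move=> [df _] t0.
have -> : gg f = f * (fun y => (y ^+ 2)^-1).
  by apply/funext => y.
apply: derivableM; first exact: df.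
apply: derivableV; first by rewrite expf_neq0 // gt_eqF.
have -> : (fun y : R => y ^+ 2) = (id * id) by apply/funext => y.
by apply: derivableM; exact: derivable_id.
Qed.

Lemma gg_cont (R : realType) (f : R -> R) (t : R) : F4 f -> 0 < t -> {for t, continuous (gg f)}.
Proof.
move=> hf t0; apply: differentiable_continuous.
exact/derivable1_diffP/gg_der.
Qed.

Lemma gg_meas (R : realType) (f : R -> R) (u : R) : F4 f -> 0 <= u ->
  measurable_fun `[0, u] (gg f).
Proof.
move=> hf u0.
rewrite -(@setU1itv _ _ _ _ false); last by rewrite bnd_simp.
apply/measurable_funU => //; split.
  move=> _ Y mY.
  have [Y0|Y0] := pselect (Y (gg f 0)).
    rewrite (_ : _ `&` _ = [set 0]) //.
    by apply/seteqP; split => x /=; [case|move=> ->].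
  rewrite (_ : _ `&` _ = set0) //.
  by apply/seteqP; split => x //= [-> ].
apply: subspace_continuous_measurable_fun => //.
apply: continuous_in_subspaceT => x; rewrite inE /= in_itv /= => /andP[x0 _].
exact: gg_cont.
Qed.

Local Notation mu := (@lebesgue_measure _).

Lemma gg_split (R : realType) (f : R -> R) (a b : R) : F1 f -> F4 f -> 0 < a -> a <= b ->
  (\int[mu]_(t in `[0%R, b]) (gg f t)%:E =
   \int[mu]_(t in `[0%R, a]) (gg f t)%:E + \int[mu]_(t in `]a, b]) (gg f t)%:E)%E /\
  (\int[mu]_(t in `]a, b]) (gg f t)%:E < +oo)%E.
Proof.
move=> h1 h4 a0 ab.
have mg : measurable_fun `[0, b] (gg f) by apply: gg_meas => //; exact: (le_trans (ltW a0)).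
split.
  rewrite (@itv_bndbnd_setU _ _ (BLeft 0) (BRight a) (BRight b)); last 2 first.
  - by rewrite bnd_simp ltW.
  - by rewrite bnd_simp.
  apply: ge0_integral_setU => //.
  - rewrite -(@itv_bndbnd_setU _ _ (BLeft 0) (BRight a) (BRight b)).
    + exact/measurable_EFinP.
    + by rewrite bnd_simp ltW.
    + by rewrite bnd_simp.
  - move=> x [] /=; rewrite in_itv /= => /andP[x0 _]; rewrite lee_fin gg_ge0 //.
      by rewrite (le_trans (ltW a0)) // ltW.
  - apply/disj_setPS => x [] /=; rewrite !in_itv /= => /andP[_ xa] /andP[ax _].
    by move: (lt_le_trans ax xa); rewrite ltxx.
have mg' : measurable_fun `]a, b] (gg f).
  apply: measurable_funS mg => //.
  by move=> x /=; rewrite !in_itv /= => /andP[ax ->]; rewrite andbT (le_trans (ltW a0)) // ltW.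
apply: (@le_lt_trans _ _ (\int[mu]_(t in `]a, b]) (cst (f b / a ^+ 2) t)%:E)%E).
  apply: ge0_le_integral => //.
  - move=> x /= /[!in_itv] /= /andP[ax _]; rewrite lee_fin gg_ge0 //.
    by rewrite (le_trans (ltW a0)) // ltW.
  - exact/measurable_EFinP.
  - by apply/measurable_EFinP; exact: measurable_cst.
  - move=> x /= /[!in_itv] /= /andP[ax xb]; rewrite lee_fin /gg.
    have x0 : 0 < x by apply: lt_trans ax.
    apply: (@le_trans _ _ (f b / x ^+ 2)).
      rewrite ler_wpM2r ?invr_ge0 ?sqr_ge0 //.
      move: xb; rewrite le_eqVlt => /orP[/eqP -> //|xb].
      by apply: ltW; case: h1 => _ [_ ]; apply.
    rewrite ler_wpM2l //; first by case: h1 => + _; apply; rewrite (le_trans (ltW a0)).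
    rewrite lef_pV2 ?posrE ?exprn_gt0 //.
    by rewrite ler_pXn2r ?nnegrE ?ltW.
rewrite (_ : (fun x => (cst (f b / a ^+ 2) x)%:E) = cst (f b / a ^+ 2)%:E) //.
rewrite integral_cst //= lebesgue_measure_itv /= lte_fin.
case: ifP => _; last by rewrite mule0 ltry.
by rewrite -EFinD -EFinM ltry.
Qed.
Lemma fs_bound (R : realType) (f : R -> R) (C : R) : F1 f -> F2 f -> 0 < C ->
  exists D : R, forall s, 0 < s -> s <= C -> f s / s <= D.
Proof.
move=> [f0 [_ fi]] [h2 _] C0.
have := @cvgr_lt _ _ _ _ _ _ h2 1 ltr01.
case=> e /= e0 He.
pose d := Num.min (e / 2) 1.
have d0 : 0 < d by rewrite lt_min ltr01 andbT divr_gt0.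
have de : d < e by rewrite gt_min ltr_pdivrMr // ltr_pMr // ltr1n orTb.
have d1 : d <= 1 by rewrite ge_min lexx orbT.
exists (Num.max 1 (f C / d)) => s s0 sC.
have [sd|ds] := ltP s d.
  have := He s.
  rewrite /ball /= sub0r normrN gtr0_norm // => /(_ (lt_trans sd de) s0).
  rewrite powRN ltr_pdivrMr ?powR_gt0 // mul1r => fsp.
  have sp : s `^ (4 / 3) <= s.
    apply: ge1r_powR; first by rewrite s0 (le_trans (ltW sd)).
    by rewrite ler_pdivlMr // mul1r ler_nat.
  rewrite le_max; apply/orP; left.
  by rewrite ler_pdivrMr // mul1r (le_trans (ltW fsp)).
rewrite le_max; apply/orP; right.
apply: ler_pM.
- exact/f0/ltW.
- by rewrite invr_ge0 ltW.
- move: sC; rewrite le_eqVlt => /orP[/eqP -> //|sC].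
  exact/ltW/fi.
- by rewrite lef_pV2 ?posrE.
Qed.

Definition GG (R : realType) (f : R -> R) (s : R) : R :=
  fine (\int[mu]_(t in `[0%R, s]) (gg f t)%:E)%E.
Arguments GG {R} f s.

Lemma Afun_eq (R : realType) (f : R -> R) : Afun f = (id : R -> R) * GG f.
Proof. by apply/funext => s. Qed.

Lemma I_dich (R : realType) (f : R -> R) : F1 f -> F4 f ->
  (forall u : R, 0 < u -> (\int[mu]_(t in `[0%R, u]) (gg f t)%:E < +oo)%E) \/
  (forall u : R, 0 < u -> (\int[mu]_(t in `[0%R, u]) (gg f t)%:E = +oo)%E).
Proof.
move=> h1 h4.
have [//|H] := pselect (forall u : R, 0 < u -> (\int[mu]_(t in `[0%R, u]) (gg f t)%:E < +oo)%E).
  by left.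
right.
have [u0 [u00 Hu0]] : exists u0 : R, 0 < u0 /\ (\int[mu]_(t in `[0%R, u0]) (gg f t)%:E = +oo)%E.
  apply: contra_notP H => H u up; rewrite ltey; apply/negP => /eqP Iu.
  by apply: H; exists u.
move=> u up.
have [uu0|u0u] := leP u0 u.
  have [-> _] := @gg_split _ _ _ _ h1 h4 u00 uu0.
  rewrite Hu0 addye // gt_eqF // (lt_le_trans _ (integral_ge0 _ _)) ?ltNy0 //.
  move=> x /= /[!in_itv] /= /andP[ax _]; rewrite lee_fin gg_ge0 //.
  by rewrite (le_trans (ltW u00)) // ltW.
have [E J] := @gg_split _ _ _ _ h1 h4 up (ltW u0u).
apply/eqP; rewrite -leye_eq; rewrite leNgt; apply/negP => Iu.
by move: (lte_add_pinfty Iu J); rewrite -E Hu0 ltxx.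
Qed.

Lemma dA_bound (R : realType) (f : R -> R) (C : R) : F1 f -> F2 f -> F4 f -> 0 < C ->
  exists B : R, forall s, 0 < s -> s <= C -> derive1 (Afun f) s <= B.
Proof.
move=> h1 h2 h4 C0.
have [D HD] := @fs_bound _ f C h1 h2 C0.
exists (Num.max 0 (D + GG f C)) => s s0 sC.
case: (I_dich h1 h4) => [Hfin|Hinf].
  have intg : forall u : R, 0 < u -> mu.-integrable `[0%R, u] (EFin \o gg f).
    move=> u u0; apply/integrableP; split.
      apply/measurable_EFinP; apply: gg_meas => //; exact: ltW.
    apply: le_lt_trans (Hfin u u0); rewrite le_eqVlt; apply/orP; left; apply/eqP.
    apply: eq_integral => x; rewrite inE /= in_itv /= => /andP[x0 _].
    by rewrite ger0_norm // gg_ge0.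
  have ss1 : s < s + 1 by rewrite ltrDl ltr01.
  have [dG G'] := @continuous_FTC1_closed R (gg f) 0 s (s + 1) ss1
     (intg _ (addr_gt0 s0 ltr01)) s0 (gg_cont h4 s0).
  have dG' : derivable (GG f) s 1 := dG.
  rewrite Afun_eq derive1E deriveM //.
  rewrite derive_id -derive1E G' /=. rewrite -[s *: gg f s]/(s * gg f s) -[(GG f s)%:A]/(GG f s * 1).
  have -> : s * gg f s = f s / s.
    by rewrite /gg expr2 invfM mulrCA !mulrA mulfK ?gt_eqF.
  rewrite mulr1 le_max; apply/orP; right; apply: lerD; first exact: HD.
  have Ige0 : forall u : R, (0 <= \int[mu]_(t in `[0%R, u]) (gg f t)%:E)%E.
    move=> u; apply: integral_ge0 => x /= /[!in_itv] /= /andP[x0 _].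
    by rewrite lee_fin gg_ge0.
  rewrite /GG; have [-> J] := @gg_split _ _ _ _ h1 h4 s0 sC.
  have J0 : (0 <= \int[mu]_(t in `]s, C]) (gg f t)%:E)%E.
    apply: integral_ge0 => x /= /[!in_itv] /= /andP[x0 _].
    by rewrite lee_fin gg_ge0 // (le_trans (ltW s0)) // ltW.
  apply: fine_le.
  - by rewrite ge0_fin_numE ?Ige0 ?Hfin.
  - by rewrite ge0_fin_numE ?(adde_ge0 (Ige0 s) J0) ?(lte_add_pinfty (Hfin s s0) J).
  - exact: leeDl.
rewrite derive1E (@near_eq_derive _ _ _ _ (cst 0)) ?derive_cst ?le_max ?lexx //.
near=> x.
have x0 : 0 < x by near: x; exact: lt_nbhsr.
by rewrite /Afun (Hinf x x0) /= mulr0.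
Unshelve. all: by end_near.
Qed.

Lemma quad_cont (R : realType) : continuous (fun p : pt R => p.1.1 ^+ 2 + p.1.2 ^+ 2).
Proof.
move=> p.
have h11 : (fun q : pt R => q.1.1) @ p --> p.1.1.
  by apply: (cvg_comp _ _ cvg_fst); exact: cvg_fst.
have h12 : (fun q : pt R => q.1.2) @ p --> p.1.2.
  by apply: (cvg_comp _ _ cvg_fst); exact: cvg_snd.
rewrite (_ : (fun p : pt R => p.1.1 ^+ 2 + p.1.2 ^+ 2) =
  (fun q : pt R => q.1.1 * q.1.1 + q.1.2 * q.1.2)); last first.
  by apply/funext => q; rewrite !expr2.
by apply: cvgD; apply: cvgM.
Qed.

Unset Implicit Arguments.

Theorem mainTheorem11 (R : realType) (K : set (pt R)) (f : R -> R)
    (q : R) (rhoK : pt R -> R) (M Omega : R) (rho : pt R -> R) :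
  bounded3 K -> domain3 K -> axisym_set K -> no_trapping K ->
  F1 f -> F2 f -> F3 f -> F4 f ->
  3 < q -> Lq_on K q rhoK -> (forall x, K x -> 0 <= rhoK x) ->
  axisym_fun K rhoK ->
  0 < M -> 1 <= Omega ->
  (forall x, ~ K x -> 0 <= rho x) ->
  (exists C : R, forall x, ~ K x -> rho x <= C) ->
  {within ~` K, continuous rho} ->
  mass3 (~` K) rho = M%:E ->
  (exists lam : R, forall x, ~ K x -> 0 < rho x ->
     derive1 (Afun f) (rho x) - newton (~` K) rho x
       - 2^-1 * Omega ^+ 2 * rcyl x ^+ 2 - newton K rhoK x = lam) ->
  (ereal_sup [set (rcyl y)%:E | y in closure [set x | ~ K x /\ (0 < rho x)%R]]
     < +oo)%E.
Proof.
move=> _ _ _ _ h1 h2 _ h4 _ _ rhoK0 _ _ Om1 rho0 [Cb HC] _ _ [lam Hlam].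
pose C := Num.max Cb 1.
have C0 : 0 < C by rewrite lt_max ltr01 orbT.
have [B HB] := dA_bound h1 h2 h4 C0.
pose E := 2 * (B - lam).
have sub : [set x | ~ K x /\ 0 < rho x] `<=` [set y : pt R | y.1.1 ^+ 2 + y.1.2 ^+ 2 <= E].
  move=> x [Kx rx] /=.
  have := Hlam x Kx rx.
  have N1 : 0 <= newton (~` K) rho x.
    apply: fine_ge0; apply: integral_ge0 => y Ky; rewrite lee_fin.
    by rewrite divr_ge0 ?rho0 ?sqrtr_ge0.
  have N2 : 0 <= newton K rhoK x.
    apply: fine_ge0; apply: integral_ge0 => y Ky; rewrite lee_fin.
    by rewrite divr_ge0 ?rhoK0 ?sqrtr_ge0.
  have dB : derive1 (Afun f) (rho x) <= B.
    by apply: HB => //; rewrite le_max HC.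
  have r2 : rcyl x ^+ 2 = x.1.1 ^+ 2 + x.1.2 ^+ 2.
    by rewrite /rcyl sqr_sqrtr // addr_ge0 ?sqr_ge0.
  have Om : rcyl x ^+ 2 <= Omega ^+ 2 * rcyl x ^+ 2.
    by apply: ler_peMl; rewrite ?sqr_ge0 // expr_ge1 // (le_trans ler01).
  rewrite -r2 /E => H; lra.
have cl : closed [set y : pt R | y.1.1 ^+ 2 + y.1.2 ^+ 2 <= E].
  apply: (@preimage_closed _ _ (fun p : pt R => p.1.1 ^+ 2 + p.1.2 ^+ 2) [set z | z <= E]).
    by move=> p _; exact: quad_cont.
  exact: closed_le.
have eT := (closure_id _).1 cl.
have csub : closure [set x | ~ K x /\ 0 < rho x] `<=` [set y : pt R | y.1.1 ^+ 2 + y.1.2 ^+ 2 <= E].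
  by move=> y Hy; rewrite eT; exact: closure_subset sub y Hy.
apply: (@le_lt_trans _ _ (1 + E)%:E); last exact: ltry.
apply: ge_ereal_sup => _ [y /csub /= Hy <-]; rewrite lee_fin.
have r2 : rcyl y ^+ 2 = y.1.1 ^+ 2 + y.1.2 ^+ 2.
  by rewrite /rcyl sqr_sqrtr // addr_ge0 ?sqr_ge0.
have r0 : 0 <= rcyl y by rewrite /rcyl sqrtr_ge0.
rewrite -r2 in Hy.
nra.
Qed.
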